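(* Let $u\le v$ in $S_n$, let $I$ be an order ideal in $[u,v]$, and let $x\in I$ have a strong hypercube cluster $\theta_x:\mathcal{A}_x\to[u,v]$ relative to $I$. Let $\mathcal{I}\subset\mathcal{A}_x$ be any order ideal (with respect to inclusion). Then for any injection $\phi:\mathcal{I}\hookrightarrow[u,v]$ satisfying $\phi(\varnothing)=x$, $\phi(\{y\})=y$ for every singleton $\{y\}\in\mathcal{I}$, and $\phi(Y_1)\to\phi(Y_2)$ in $\Gamma(u,v)$ whenever $Y_1,Y_2\in\mathcal{I}$ with $Y_1\to Y_2$, the map $\phi$ equals the restriction of $\theta_x$ to $\mathcal{I}$.
   Context: $S_n$ is the symmetric group with length $\ell$ (with respect to simple reflections $s_i=(i\ i{+}1)$), $T$ its set of transpositions. The Bruhat graph $\Gamma$ has vertex set $S_n$ and an edge $w\to tw$ whenever $t\in T$, $\ell(w)<\ell(tw)$; Bruhat order $\le$ is reachability in $\Gamma$; $\Gamma(u,v)$ is the induced subgraph on the interval $[u,v]$. An order ideal of $[u,v]$ is a downward closed subset. For an order ideal $I\subset[u,v]$ and $x\in I$ let $\mathcal{Y}_x=\{y\in[u,v]\setminus I: x\to y \text{ in }\Gamma\}$ and $\mathcal{A}_x$ the set of subsets of $\mathcal{Y}_x$ that are antichains in Bruhat order, ordered by inclusion and viewed as a directed graph with $Y_1\to Y_2$ iff $Y_1\subset Y_2$ and $|Y_2\setminus Y_1|=1$. A strong hypercube cluster at $x$ relative to $I$ is a map $\theta_x:\mathcal{A}_x\to[u,v]$ such that: (HC1) $\theta_x(\varnothing)=x$;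 (HC2) $\theta_x(\{y\})=y$ for $y\in\mathcal{Y}_x$; (HC3) if $Y_1\to Y_2$ then $\theta_x(Y_1)\to\theta_x(Y_2)$ is an edge of $\Gamma$; (HC4) if $Y,Y'\in\mathcal{A}_x$ with $|Y|=|Y'|=|Y\cap Y'|+1$ and there is $w$ such that $\theta_x(Y\cap Y')\to\theta_x(Y)\to w$ and $\theta_x(Y\cap Y')\to\theta_x(Y')\to w$ form a diamond (four distinct vertices with these edges) in $\Gamma(u,v)$, then $Y\cup Y'$ is an antichain and $\theta_x(Y\cup Y')=w$. *)

(* Defs.v *)
From mathcomp Require Import all_boot all_order all_fingroup.
Set Implicit Arguments. Unset Strict Implicit. Unset Printing Implicit Defensive.

Section Bruhat.
Variable n : nat.
Local Notation Sn := {perm 'I_n}.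

(* Coxeter length of w in S_n w.r.t. simple reflections = number of inversions. *)
Definition perm_length (w : Sn) : nat :=
  #|[set p : 'I_n * 'I_n | (p.1 < p.2)%N && (w p.2 < w p.1)%N]|.

Definition is_transposition (t : Sn) : bool :=
  [exists i : 'I_n, exists j : 'I_n, (i != j) && (t == tperm i j)].

(* Bruhat graph edge w -> t w  (t w = "first w then t" = (w * t)%g in mathcomp's
   composition convention), with l(w) < l(tw). *)
Definition bruhat_edge (w w' : Sn) : bool :=
  [exists t : Sn, is_transposition t && (w' == (w * t)%g)]
  && (perm_length w < perm_length w')%N.

Definition bruhat_le (w w' : Sn) : bool := connect bruhat_edge w w'.

Definition binterval (u v : Sn) : {set Sn} :=
  [set w | bruhat_le u w && bruhat_le w v].

Definition is_order_ideal (u v : Sn) (I : {set Sn}) : Prop :=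
  I \subset binterval u v /\
  forall a b, a \in binterval u v -> b \in I -> bruhat_le a b -> a \in I.

Definition Ycal (u v : Sn) (I : {set Sn}) (x : Sn) : {set Sn} :=
  [set y in binterval u v :\: I | bruhat_edge x y].

Definition is_antichain (Y : {set Sn}) : bool :=
  [forall y1 in Y, forall y2 in Y, bruhat_le y1 y2 ==> (y1 == y2)].

Definition Acal (u v : Sn) (I : {set Sn}) (x : Sn) : {set {set Sn}} :=
  [set Y : {set Sn} | (Y \subset Ycal u v I x) && is_antichain Y].

Definition cover_edge (Y1 Y2 : {set Sn}) : bool :=
  (Y1 \subset Y2) && (#|Y2 :\: Y1| == 1%N).

(* Strong hypercube cluster at x relative to I; theta is a total function, only
   its values on A_x matter. *)
Definition strong_hypercube_cluster (u v : Sn) (I : {set Sn}) (x : Sn)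
    (theta : {set Sn} -> Sn) : Prop :=
  let A := Acal u v I x in
  (forall Y, Y \in A -> theta Y \in binterval u v) /\
  theta set0 = x /\
  (forall y, y \in Ycal u v I x -> theta [set y] = y) /\
  (forall Y1 Y2, Y1 \in A -> Y2 \in A -> cover_edge Y1 Y2 ->
               bruhat_edge (theta Y1) (theta Y2)) /\
  (forall Y Y' w, Y \in A -> Y' \in A ->
               #|Y| = (#|Y :&: Y'|).+1 -> #|Y'| = (#|Y :&: Y'|).+1 ->
               w \in binterval u v ->
               uniq [:: theta (Y :&: Y'); theta Y; theta Y'; w] ->
               bruhat_edge (theta (Y :&: Y')) (theta Y) ->
               bruhat_edge (theta Y) w ->
               bruhat_edge (theta (Y :&: Y')) (theta Y') ->
               bruhat_edge (theta Y') w ->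
               is_antichain (Y :|: Y') /\ theta (Y :|: Y') = w).

End Bruhat.

(* Main.v *)
Require Import Defs.
From mathcomp Require Import all_boot all_order all_fingroup.

Lemma cover_D1 n (S : {set {perm 'I_n}}) c : c \in S -> cover_edge (S :\ c) S.
Proof.
move=> Hc; rewrite /cover_edge subD1set /=.
have -> : S :\: (S :\ c) = [set c].
  apply/setP => z; rewrite !inE; case: (z =P c) => [->|] /=; first by rewrite Hc.
  by rewrite andNb.
by apply/eqP; apply: cards1.
Qed.

Theorem lemma3p5 (n : nat) (u v : {perm 'I_n}) (I : {set {perm 'I_n}})
    (x : {perm 'I_n}) (theta : {set {perm 'I_n}} -> {perm 'I_n})
    (calI : {set {set {perm 'I_n}}}) (phi : {set {perm 'I_n}} -> {perm 'I_n}) :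
  bruhat_le u v ->
  is_order_ideal u v I ->
  x \in I ->
  strong_hypercube_cluster u v I x theta ->
  calI \subset Acal u v I x ->
  (forall Y Z : {set {perm 'I_n}}, Y \in calI -> Z \subset Y -> Z \in calI) ->
  {in calI &, injective phi} ->
  (forall Y, Y \in calI -> phi Y \in binterval u v) ->
  (set0 \in calI -> phi set0 = x) ->
  (forall y, [set y] \in calI -> phi [set y] = y) ->
  (forall Y1 Y2, Y1 \in calI -> Y2 \in calI -> cover_edge Y1 Y2 ->
     bruhat_edge (phi Y1) (phi Y2)) ->
  forall Y, Y \in calI -> phi Y = theta Y.
Proof.
move=> _ _ _ [_ [H1 [H2 [_ H4]]]] sIA Idown inj phiB phi0 phi1 phiE.
move=> Y; move: {2}#|Y| (leqnn #|Y|) => k; elim: k Y => [|k IH] Y.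
  rewrite leqn0 => /eqP/cards0_eq -> Hin; by rewrite H1 phi0.
rewrite leq_eqVlt ltnS => /orP [/eqP Hk | Hk]; last exact: IH.
move=> YI.
have YA : Y \in Acal u v I x by apply: (subsetP sIA).
case: k IH Hk => [|k] IH Hk.
  have [y Hy] := cards1P (introT eqP Hk). subst Y.
  rewrite phi1 // H2 //.
  move: YA; rewrite inE => /andP [/subsetP S _]; apply: S; exact: set11.
have /set0Pn [a Ha] : Y != set0 by rewrite -card_gt0 Hk.
have HkA : #|Y :\ a| = k.+1 by rewrite (cardsD1 a Y) Ha in Hk; case: Hk.
have /set0Pn [b Hb] : Y :\ a != set0 by rewrite -card_gt0 HkA.
have bY : b \in Y by move: Hb; rewrite !inE => /andP [].
have ba : b != a by move: Hb; rewrite !inE => /andP [].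
set Y1 := Y :\ a. set Y2 := Y :\ b. set Z := Y1 :\ b.
have Y1I : Y1 \in calI by apply: Idown YI _; apply: subD1set.
have Y2I : Y2 \in calI by apply: Idown YI _; apply: subD1set.
have ZI : Z \in calI by apply: Idown Y1I _; apply: subD1set.
have HkB : #|Y2| = k.+1 by rewrite (cardsD1 b Y) bY in Hk; case: Hk.
have HkZ : #|Z| = k by rewrite (cardsD1 b Y1) Hb in HkA; case: HkA.
have EZ : Y1 :&: Y2 = Z.
  by apply/setP => z; rewrite !inE; case: (z == a); case: (z == b); case: (z \in Y).
have EU : Y1 :|: Y2 = Y.
  have ab : a != b by rewrite eq_sym.
  apply/setP => z; rewrite !inE; case: (z =P a) => [->|/eqP za]; rewrite ?eqxx ?ab ?Ha ?za //=.
  by case: (z \in Y); rewrite ?andbF.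
have Za : Z \subset Y2.
  by apply/subsetP => z; rewrite !inE => /and3P [zb za zY]; rewrite zb zY.
have cZ2 : cover_edge Z Y2.
  have -> : Z = Y2 :\ a by apply/setP => z; rewrite !inE; case: (z == a); case: (z == b); case: (z \in Y).
  apply: cover_D1; by rewrite !inE eq_sym ba Ha.
have cZ1 : cover_edge Z Y1 by apply: cover_D1.
have c1 : cover_edge Y1 Y by apply: cover_D1.
have c2 : cover_edge Y2 Y by apply: cover_D1.
have IZ : phi Z = theta Z by apply: IH => //; rewrite HkZ.
have I1 : phi Y1 = theta Y1 by apply: IH => //; rewrite HkA.
have I2 : phi Y2 = theta Y2 by apply: IH => //; rewrite HkB.
have neq : forall A B, A \in calI -> B \in calI -> #|A| != #|B| -> phi A != phi B.
  move=> A B AI BI; apply: contra => /eqP /inj -> //.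
have n12 : phi Y1 != phi Y2.
  apply/negP => /eqP /inj E; have := E Y1I Y2I => E'.
  by move: Hb; rewrite -/Y1 E' !inE eqxx.
have U : uniq [:: theta (Y1 :&: Y2); theta Y1; theta Y2; phi Y].
  rewrite EZ -IZ -I1 -I2 /= !inE !negb_or n12 !neq //;
   by rewrite ?HkZ ?HkA ?HkB ?Hk ?ltn_eqF ?ltnS ?leqnn //.
have A1 : Y1 \in Acal u v I x by apply: (subsetP sIA).
have A2 : Y2 \in Acal u v I x by apply: (subsetP sIA).
have E1 : bruhat_edge (theta (Y1 :&: Y2)) (theta Y1) by rewrite EZ -IZ -I1; apply: phiE.
have E2 : bruhat_edge (theta Y1) (phi Y) by rewrite -I1; apply: phiE.
have E3 : bruhat_edge (theta (Y1 :&: Y2)) (theta Y2) by rewrite EZ -IZ -I2; apply: phiE.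
have E4 : bruhat_edge (theta Y2) (phi Y) by rewrite -I2; apply: phiE.
have C1 : #|Y1| = #|Y1 :&: Y2|.+1 by rewrite EZ HkZ HkA.
have C2 : #|Y2| = #|Y1 :&: Y2|.+1 by rewrite EZ HkZ HkB.
have [_ ] := H4 Y1 Y2 (phi Y) A1 A2 C1 C2 (phiB _ YI) U E1 E2 E3 E4.
by rewrite EU => ->.
Qed.
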